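(* Let $p$ be a prime and let $G$ be a $1$-tuple regular finite group of exponent $p^s$ for some $s\in\mathbb{N}$. Then $\Omega_{s-i}(G)=\mho^i(G)$ for every $i\in\{0,\ldots,s\}$.
   Context: For a finite $p$-group $G$ and $i\ge 0$, $\Omega_i(G)$ is the subgroup generated by all elements of order dividing $p^i$, and $\mho^i(G)$ is the subgroup generated by all $p^i$-th powers of elements of $G$. A finite group $G$ is $1$-tuple regular if for all $g_1,h_1\in G$ of the same order there is a bijection $\Psi\colon G\to G$ such that for every $g\in G$ the assignment $g_1\mapsto h_1, g\mapsto\Psi(g)$ defines an isomorphism $\langle g_1,g\rangle\to\langle h_1,\Psi(g)\rangle$. *)

(* Defs.v *)
From mathcomp Require Import all_boot all_fingroup all_solvable.
Set Implicit Arguments. Unset Strict Implicit. Unset Printing Implicit Defensive.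
Local Open Scope group_scope.

Definition one_tuple_regular (gT : finGroupType) (G : {group gT}) : Prop :=
  forall g1 h1 : gT, g1 \in G -> h1 \in G -> #[g1] = #[h1] ->
  exists Psi : gT -> gT,
    [/\ {in G, forall g, Psi g \in G},
        {in G &, injective Psi} &
        {in G, forall g,
           exists f : {morphism <<[set g1; g]>> >-> gT},
             [/\ isom <<[set g1; g]>> <<[set h1; Psi g]>> f,
                 f g1 = h1 & f g = Psi g]}].

(* Main.v *)
Require Import Defs.
From mathcomp Require Import all_boot all_fingroup all_solvable.
Local Open Scope group_scope.

Theorem lemma4p3 (p : nat) (gT : finGroupType) (G : {group gT}) (s : nat) :
  prime p -> exponent G = (p ^ s)%N -> one_tuple_regular G ->
  forall i : nat, i <= s -> 'Ohm_(s - i)(G) = 'Mho^i(G).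
Proof.
move=> pr eG reg i lei.
have [G1 | ntG] := boolP (G :==: 1).
  have h1 : 'Ohm_(s - i)(G) \subset [1 gT] by rewrite -(eqP G1); apply: Ohm_sub.
  have h2 : 'Mho^i(G) \subset [1 gT] by rewrite -(eqP G1); apply: Mho_sub.
  by rewrite (trivgP h1) (trivgP h2).
have pG : p.-group G by rewrite -pnat_exponent eG pnatX pnat_id.
have key : forall y k, y \in G -> #[y] = (p ^ k)%N -> k <= s ->
    exists2 x, x \in G & y = x ^+ (p ^ (s - k)).
  move=> y k yG oy lek.
  have [g gG og] := exponent_witness (pgroup_nil pG).
  rewrite eG in og.
  set h := g ^+ (p ^ (s - k)).
  have hG : h \in G by rewrite groupX.
  have oh : #[h] = #[y].
    rewrite /h orderXdiv -og; last by rewrite dvdn_exp2l // leq_subr.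
    by rewrite -expnB ?prime_gt0 ?leq_subr // subKn.
  have [Psi [PsiG _ Hf]] := reg h y hG yG oh.
  have [f [_ fh fg]] := Hf g gG.
  exists (Psi g); first exact: PsiG.
  have gD : g \in <<[set h; g]>> by apply: mem_gen; rewrite !inE eqxx orbT.
  by rewrite -fh -fg /h morphX.
rewrite (OhmE _ pG) (MhoE _ pG).
apply/eqP; rewrite eqEsubset; apply/andP; split; rewrite gen_subG.
  apply/subsetP => y; rewrite !inE => /andP[yG y1].
  have : #[y] %| p ^ (s - i) by rewrite order_dvdn.
  case/dvdn_pfactor => // k lek oy.
  have lek' : k <= s by apply: leq_trans lek (leq_subr _ _).
  have [x xG ->] := key y k yG oy lek'.
  apply: mem_gen; apply/imsetP; exists (x ^+ (p ^ (s - k - i))); first by rewrite groupX.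
  rewrite -expgM -expnD subnK //.
  by rewrite leq_subRL // addnC -leq_subRL.
apply/subsetP => _ /imsetP[x xG ->]; apply: mem_gen.
by rewrite !inE groupX //= -expgM -expnD subnKC // -order_dvdn -eG dvdn_exponent.
Qed.
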